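(* Let $\Omega$ be a set, let $\Phi$ be the family consisting of all coherent sets of gambles on $\Omega$ together with $\mathcal{L}(\Omega)$, and let $At(\Phi)$ be its set of atoms (maximal coherent sets). For all $M,M'\in At(\Phi)$ and every $x\in Q$, $$M\equiv_x M' \iff \epsilon_x(M)=\epsilon_x(M') \iff M,M'\in At(\epsilon_x(M)).$$ Consequently, for all $x,y\in Q$: $At_x\le At_y$ if and only if $At(\epsilon_x(M))\supseteq At(\epsilon_y(M))$ for every $M\in At(\Phi)$.
   Context: A gamble on $\Omega$ is a bounded function $f:\Omega\to\mathbb{R}$; $\mathcal{L}(\Omega)$ is the set of all gambles and $\mathcal{L}^+(\Omega)=\{f\in\mathcal{L}(\Omega): f\ge 0, f\ne 0\}$. A set $\mathcal{D}\subseteq\mathcal{L}(\Omega)$ is coherent if (D1) $\mathcal{L}^+(\Omega)\subseteq\mathcal{D}$, (D2) $0\notin\mathcal{D}$, (D3) $f,g\in\mathcal{D}\Rightarrow f+g\in\mathcal{D}$, (D4) $f\in\mathcal{D},\lambda>0\Rightarrow\lambda f\in\mathcal{D}$. $\Phi$ is the set of coherent sets together with $\mathcal{L}(\Omega)$; for $\mathcal{K}\subseteq\mathcal{L}(\Omega)$ put $\mathcal{C}(\mathcal{K})=\bigcap\{\mathcal{D}\in\Phi:\mathcal{K}\subseteq\mathcal{D}\}$. Questions: $Q$ is an index set, each $x\in Q$ corresponds to a partition $\mathcal{P}_x$ of $\Omega$ (equivalence relation $\equiv_x$), and $\{\mathcal{P}_x:x\in Q\}$ is closed under join, where partitions are ordered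 by $\mathcal{P}_x\le\mathcal{P}_y$ iff every block of $\mathcal{P}_y$ is contained in a block of $\mathcal{P}_x$, and the join is the partition of nonempty intersections of blocks. A gamble is $x$-measurable if it is constant on each block of $\mathcal{P}_x$; $\mathcal{L}_x$ denotes the set of $x$-measurable gambles. Extraction: $\epsilon_x(\mathcal{D})=\mathcal{C}(\mathcal{D}\cap\mathcal{L}_x)$ for $\mathcal{D}\in\Phi$. Atoms of $\Phi$ are the maximal coherent sets (coherent sets not properly contained in another coherent set); $At(\Phi)$ denotes the set of all of them, and for $\mathcal{D}\in\Phi$, $At(\mathcal{D})=\{M\in At(\Phi):\mathcal{D}\subseteq M\}$. For $x\in Q$, the sets $At(\epsilon_x(M))$, $M\in At(\Phi)$, form a partition $At_x$ of $At(\Phi)$ (known from prior work); $M\equiv_x M'$ means $M$ and $M'$ lie in the same block of $At_x$, i.e. there is $M''\in At(\Phi)$ with $M,M'\in At(\epsilon_x(M''))$. Partitions of $At(\Phi)$ are ordered by $At_x\le At_y$ iff $M\equiv_y M'$ implies $M\equiv_x M'$ for all $M,M'\in At(\Phi)$. *)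

(* Defs.v *)
From Stdlib Require Import Reals.
Open Scope R_scope.
Set Implicit Arguments.

Section Gambles.
Variable Omega : Type.

Definition gamble_set := (Omega -> R) -> Prop.

Definition bounded (f : Omega -> R) : Prop :=
  exists b : R, forall w, Rabs (f w) <= b.

Definition Lall : gamble_set := bounded.

Definition zero_g : Omega -> R := fun _ => 0.

Definition Lpos (f : Omega -> R) : Prop :=
  bounded f /\ (forall w, 0 <= f w) /\ f <> zero_g.

Definition subset (A B : gamble_set) : Prop := forall f, A f -> B f.
Definition seteq (A B : gamble_set) : Prop := forall f, A f <-> B f.

Definition coherent (D : gamble_set) : Prop :=
  subset D Lall /\
  subset Lpos D /\
  ~ D zero_g /\
  (forall f g, D f -> D g -> D (fun w => f w + g w)) /\
  (forall f (l : R), D f -> 0 < l -> D (fun w => l * f w)).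

Definition Phi (D : gamble_set) : Prop := coherent D \/ seteq D Lall.

Definition Cl (K : gamble_set) : gamble_set :=
  fun f => forall D, Phi D -> subset K D -> D f.

Definition atom (M : gamble_set) : Prop :=
  coherent M /\ (forall D, coherent D -> subset M D -> seteq D M).

Definition At (D : gamble_set) (M : gamble_set) : Prop := atom M /\ subset D M.

Section Questions.
Variable Q : Type.
(* each question x corresponds to the partition given by the equivalence eqv x *)
Variable eqv : Q -> Omega -> Omega -> Prop.

Definition measurable (x : Q) (f : Omega -> R) : Prop :=
  forall w w', eqv x w w' -> f w = f w'.

Definition Lx (x : Q) : gamble_set := fun f => bounded f /\ measurable x f.

Definition extr (x : Q) (D : gamble_set) : gamble_set :=
  Cl (fun f => D f /\ Lx x f).

Definition at_equiv (x : Q) (M M' : gamble_set) : Prop :=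
  exists M'', atom M'' /\ At (extr x M'') M /\ At (extr x M'') M'.

Definition At_le (x y : Q) : Prop :=
  forall M M', atom M -> atom M' -> at_equiv y M M' -> at_equiv x M M'.

End Questions.
End Gambles.

Definition is_equiv {Omega : Type} (e : Omega -> Omega -> Prop) : Prop :=
  (forall w, e w w) /\ (forall w w', e w w' -> e w' w) /\
  (forall w1 w2 w3, e w1 w2 -> e w2 w3 -> e w1 w3).

Definition join_closed {Omega Q : Type} (eqv : Q -> Omega -> Omega -> Prop) : Prop :=
  forall x y, exists z, forall w w', eqv z w w' <-> (eqv x w w' /\ eqv y w w').

(* Main.v *)
Require Import Defs.
From Stdlib Require Import Reals.
From Stdlib Require Import Lra Classical FunctionalExtensionality.
Open Scope R_scope.

Lemma ext_mem {Omega} (M : gamble_set Omega) (f g : Omega -> R) :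
  M f -> (forall w, f w = g w) -> M g.
Proof. intros H E. replace g with f; auto. apply functional_extensionality; auto. Qed.

Lemma rabs_sub_bound a b : Rabs (a - b) <= Rabs a + Rabs b.
Proof.
  unfold Rminus. eapply Rle_trans; [apply Rabs_triang|]. rewrite Rabs_Ropp. lra.
Qed.

Lemma atom_neg {Omega} (M : gamble_set Omega) (f : Omega -> R) :
  atom M -> Defs.bounded f -> f <> @zero_g Omega -> ~ M f -> M (fun w => - f w).
Proof.
  intros [[HL [HP [H0 [Hadd Hsc]]]] Hmax] [bf Hbf] Hf0 HMf.
  set (D := fun h : Omega -> R => exists g l, (M g \/ ((forall w, g w = 0) /\ 0 < l))
            /\ 0 <= l /\ forall w, h w = g w - l * f w).
  assert (HD : coherent D).
  { split; [|split; [|split; [|split]]].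
    - intros h (g & l & Hg & Hl & Hh).
      assert (Defs.bounded g) as [bg Hbg].
      { destruct Hg as [Hg|[Hg _]]; [apply HL; auto| exists 0; intro w; rewrite Hg, Rabs_R0; lra]. }
      exists (bg + l * bf). intro w. rewrite Hh.
      eapply Rle_trans; [apply rabs_sub_bound|].
      rewrite Rabs_mult, (Rabs_pos_eq l Hl).
      specialize (Hbg w). specialize (Hbf w).
      assert (l * Rabs (f w) <= l * bf) by (apply Rmult_le_compat_l; auto). lra.
    - intros h Hh. exists h, 0. split; [left; apply HP; auto|split; [lra|intro; ring]].
    - intros (g & l & Hg & Hl & Hh). unfold zero_g in Hh.
      destruct Hg as [Hg|[Hg Hl']].
      + destruct (Req_dec l 0) as [E|E].
        * subst l. apply H0. apply (ext_mem M g); auto. intro w. unfold zero_g. specialize (Hh w). lra.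
        * apply HMf. apply (ext_mem M (fun w => / l * g w)).
          -- apply Hsc; auto. apply Rinv_0_lt_compat. lra.
          -- intro w. specialize (Hh w). field_simplify_eq; auto. lra.
      + apply Hf0. apply functional_extensionality. intro w. unfold zero_g.
        specialize (Hh w). rewrite Hg in Hh.
        assert (l * f w = 0) by lra. apply Rmult_integral in H. destruct H; lra.
    - intros h1 h2 (g1 & l1 & Hg1 & Hl1 & Hh1) (g2 & l2 & Hg2 & Hl2 & Hh2).
      exists (fun w => g1 w + g2 w), (l1 + l2). split; [|split; [lra|intro w; rewrite Hh1, Hh2; ring]].
      destruct Hg1 as [Hg1|[Hg1 Hl1']]; destruct Hg2 as [Hg2|[Hg2 Hl2']].
      + left; auto.
      + left. apply (ext_mem M g1); auto. intro w; rewrite Hg2; ring.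
      + left. apply (ext_mem M g2); auto. intro w; rewrite Hg1; ring.
      + right. split; [intro w; rewrite Hg1, Hg2; ring| lra].
    - intros h lam (g & l & Hg & Hl & Hh) Hlam.
      exists (fun w => lam * g w), (lam * l).
      split; [|split; [apply Rmult_le_pos; lra|intro w; rewrite Hh; ring]].
      destruct Hg as [Hg|[Hg Hl']].
      + left; auto.
      + right. split; [intro w; rewrite Hg; ring| apply Rmult_lt_0_compat; lra]. }
  assert (HMD : subset M D).
  { intros h Hh. exists h, 0. split; [left; auto|split; [lra|intro; ring]]. }
  apply (Hmax D HD HMD). exists (@zero_g Omega), 1. unfold zero_g.
  split; [right; split; [auto|lra]|split; [lra|intro; ring]].
Qed.

Section S.
Variables (Omega Q : Type) (eqv : Q -> Omega -> Omega -> Prop).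

Lemma extr_sub x (M : gamble_set Omega) : coherent M -> subset (extr eqv x M) M.
Proof. intros HM f Hf. apply Hf; [left; auto| intros g [Hg _]; auto]. Qed.

Lemma Cl_ext (K K' : gamble_set Omega) : seteq K K' -> seteq (Cl K) (Cl K').
Proof.
  intros E f; split; intros H D HD HK; apply H; auto; intros g Hg; apply HK, E; auto.
Qed.

Lemma fact2 x (M M' : gamble_set Omega) : atom M -> coherent M' ->
  subset (extr eqv x M) M' -> seteq (extr eqv x M) (extr eqv x M').
Proof.
  intros HM HM' Hs. apply Cl_ext. intro f; split.
  - intros [Hf Hx]. split; auto. apply Hs. intros D _ HK. apply HK. auto.
  - intros [Hf Hx]. split; auto.
    destruct (classic (M f)) as [H|H]; auto. exfalso.
    destruct HM' as [HL [HP [H0 [Hadd Hsc]]]].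
    assert (Hnz : f <> @zero_g Omega) by (intro E; subst; auto).
    pose proof (atom_neg M f HM (proj1 Hx) Hnz H) as Hn.
    assert (Hn' : M' (fun w => - f w)).
    { apply Hs. intros D _ HK. apply HK. split; auto. split.
      - destruct (proj1 Hx) as [b Hb]. exists b. intro w. rewrite Rabs_Ropp. auto.
      - intros w w' E. rewrite (proj2 Hx w w' E). auto. }
    apply H0. apply (ext_mem M' (fun w => f w + - f w)); auto.
    intro w. unfold zero_g. ring.
Qed.

Lemma fact1 x (M : gamble_set Omega) : atom M -> At (extr eqv x M) M.
Proof. intros HM. split; auto. apply extr_sub. apply HM. Qed.

End S.

Theorem lemma1 (Omega Q : Type) (eqv : Q -> Omega -> Omega -> Prop)
  (Heqv : forall x, is_equiv (eqv x)) (Hjoin : join_closed eqv) :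
  (forall (M M' : gamble_set Omega) (x : Q), atom M -> atom M' ->
     (at_equiv eqv x M M' <-> seteq (extr eqv x M) (extr eqv x M')) /\
     (seteq (extr eqv x M) (extr eqv x M') <->
        (At (extr eqv x M) M /\ At (extr eqv x M) M'))) /\
  (forall x y : Q,
     At_le eqv x y <->
     (forall M : gamble_set Omega, atom M ->
        forall M'' : gamble_set Omega,
          At (extr eqv y M) M'' -> At (extr eqv x M) M'')).
Proof.
  split.
  - intros M M' x HM HM'. split; split.
    + intros (N & HN & [_ H1] & [_ H2]).
      pose proof (@fact2 _ _ eqv x N _ HN (proj1 HM) H1) as E1.
      pose proof (@fact2 _ _ eqv x N _ HN (proj1 HM') H2) as E2.
      intro f. specialize (E1 f). specialize (E2 f). tauto.
    + intros E. exists M. split; auto. split; [apply fact1; auto|].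
      split; auto. intros f Hf. apply (proj1 (E f)) in Hf. apply (@extr_sub _ _ eqv x _ (proj1 HM')); auto.
    + intros E. split; [apply fact1; auto|]. split; auto.
      intros f Hf. apply (proj1 (E f)) in Hf. apply (@extr_sub _ _ eqv x _ (proj1 HM')); auto.
    + intros [_ [_ H]]. apply fact2; auto. apply HM'.
  - intros x y. split.
    + intros Hle M HM M'' [HM'' Hs].
      destruct (Hle M M'' HM HM'') as (N & HN & [_ H1] & [_ H2]).
      { exists M. split; auto. split; [apply fact1; auto| split; auto]. }
      split; auto. pose proof (@fact2 _ _ eqv x N _ HN (proj1 HM) H1) as E.
      intros f Hf. apply H2. apply E. auto.
    + intros H M M' HM HM' (N & HN & [_ H1] & [_ H2]).
      pose proof (@fact2 _ _ eqv y N _ HN (proj1 HM) H1) as E.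
      assert (Hy : At (extr eqv y M) M').
      { split; auto. intros f Hf. apply H2, E; auto. }
      exists M. split; auto. split; [apply fact1; auto|]. apply (H M HM M' Hy).
Qed.
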